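(* Let $R$ be a $*$-reducing ring and let $p,q\in R$ be projections. Then the following conditions are equivalent: (1) $1-pq$ is MP invertible; (2) $1-pqp$ is MP invertible; (3) $p-pqp$ is MP invertible; (4) $p-pq$ is MP invertible; (5) $p-qp$ is MP invertible; (6) $1-qp$ is MP invertible; (7) $1-qpq$ is MP invertible; (8) $q-qpq$ is MP invertible; (9) $q-qp$ is MP invertible; (10) $q-pq$ is MP invertible. Moreover, when any one of these conditions holds, $(p-pqp)^{\dagger}=(1-pq)^{\dagger}p$.
   Context: $R$ is an associative ring with identity $1$ and an involution $a\mapsto a^*$ (satisfying $(a^* )^*=a$, $(a+b)^*=a^*+b^*$, $(ab)^*=b^*a^*$). $R$ is $*$-reducing if $a^*a=0$ implies $a=0$ for all $a\in R$. An element $a$ is MP invertible if there is $b$ with $aba=a$, $bab=b$, $(ab)^*=ab$, $(ba)^*=ba$; this $b$ is unique and written $a^{\dagger}$. A projection is an element $p$ with $p^2=p=p^*$. *)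

(* Defs.v *)
From mathcomp Require Import all_boot all_order all_algebra.
Set Implicit Arguments. Unset Strict Implicit. Unset Printing Implicit Defensive.
Import GRing.Theory.
Local Open Scope ring_scope.

Definition involution (R : pzRingType) (star : R -> R) : Prop :=
  [/\ forall a, star (star a) = a,
      forall a b, star (a + b) = star a + star b
    & forall a b, star (a * b) = star b * star a].

Definition star_reducing (R : pzRingType) (star : R -> R) : Prop :=
  forall a, star a * a = 0 -> a = 0.

Definition is_MP_inverse (R : pzRingType) (star : R -> R) (a b : R) : Prop :=
  [/\ a * b * a = a, b * a * b = b, star (a * b) = a * b & star (b * a) = b * a].

Definition MP_invertible (R : pzRingType) (star : R -> R) (a : R) : Prop :=
  exists b, is_MP_inverse star a b.

Definition projection (R : pzRingType) (star : R -> R) (p : R) : Prop :=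
  p * p = p /\ star p = p.

(* Main.v *)
Require Import Defs.
From mathcomp Require Import all_boot all_order all_algebra.
Import GRing.Theory.
Local Open Scope ring_scope.
Set Implicit Arguments. Unset Strict Implicit.

Section MP.
Variables (R : pzRingType) (s : R -> R).
Hypothesis hinv : involution s.

Let sK x : s (s x) = x. Proof. by case: hinv. Qed.
Let sD x y : s (x + y) = s x + s y. Proof. by case: hinv. Qed.
Let sM x y : s (x * y) = s y * s x. Proof. by case: hinv. Qed.
Let s0 : s 0 = 0.
Proof. have h := sD 0 0; rewrite addr0 in h. by apply: (addrI (s 0)); rewrite -h addr0. Qed.
Let sN x : s (- x) = - s x.
Proof. by apply: (addrI (s x)); rewrite -sD !subrr s0. Qed.
Let sB x y : s (x - y) = s x - s y.
Proof. by rewrite sD sN. Qed.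
Let s1 : s 1 = 1.
Proof. have h := sM (s 1) 1. by rewrite mulr1 sK mulr1 in h. Qed.

Lemma MP_uniq y b1 b2 : is_MP_inverse s y b1 -> is_MP_inverse s y b2 -> b1 = b2.
Proof.
case=> h1 h2 h3 h4 [k1 k2 k3 k4].
have e1 : s y = s y * y * b2.
  by rewrite -{1}k1 sM k3 mulrA.
have e2 : s y = b1 * y * s y.
  by rewrite -{1}h1 -mulrA sM h4.
have -> : b1 = b1 * y * b2.
  rewrite -{1}h2 -mulrA -h3 sM e1.
  rewrite !mulrA -(mulrA b1 (s b1)) -sM h3.
  by rewrite !mulrA h2.
symmetry; rewrite -{1}k2 -k4 sM e2.
rewrite -(mulrA (b1 * y) (s y)) -sM k4.
by rewrite -!mulrA (mulrA b2) k2 !mulrA.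
Qed.

Lemma lA2 (x y z : R) : x * y = z -> forall X, X * x * y = X * z.
Proof. by move=> e X; rewrite -mulrA e. Qed.
Lemma lA3 (x y w z : R) : x * y * w = z -> forall X, X * x * y * w = X * z.
Proof. by move=> e X; rewrite -e !mulrA. Qed.

Lemma MP_star y b : is_MP_inverse s y b -> is_MP_inverse s (s y) (s b).
Proof.
case=> h1 h2 h3 h4; split.
- by rewrite -!sM mulrA h1.
- by rewrite -!sM mulrA h2.
- by rewrite -sM sK h4.
- by rewrite -sM sK h3.
Qed.

Lemma MP_selfadj y b : s y = y -> is_MP_inverse s y b -> s b = b.
Proof. move=> hy hb; apply: (MP_uniq _ hb); rewrite -{1}hy; exact: MP_star. Qed.

Lemma MP_M1 y b : is_MP_inverse s y b -> is_MP_inverse s (s y * y) (b * s b).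
Proof.
case=> h1 h2 h3 h4.
have e3 : s b * s y = y * b by rewrite -sM h3.
have e4 : s y * s b = b * y by rewrite -sM h4.
have q1 : s y * y * b * s b = b * y.
  by rewrite -(mulrA _ y b) -e3 !mulrA e4 (lA2 e4) !mulrA h2.
have q2 : b * s b * s y * y = b * y.
  by rewrite (lA2 e3) !mulrA h2.
split.
- by rewrite !mulrA (lA2 e3) !mulrA (lA3 h1) (lA3 h1).
- by rewrite !mulrA (lA2 e3) !mulrA !(lA3 h2) ?h2.
- by rewrite !sM !sK !mulrA q1 q2.
- by rewrite !sM !sK !mulrA q1 q2.
Qed.

Hypothesis hred : star_reducing s.

Lemma MP_M2 y d : is_MP_inverse s (s y * y) d -> is_MP_inverse s y (d * s y).
Proof.
move=> hd; have sd : s d = d.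
  by apply: (MP_selfadj _ hd); rewrite sM sK.
case: hd => k1 k2 k3 k4.
rewrite !mulrA in k1 k2.
set z := y * d * (s y * y) - y.
have hz : s y * z = 0 by rewrite /z mulrBr !mulrA k1 subrr.
have ez : s z = (s y * y * d - 1) * s y.
  by rewrite /z sB !sM sK sd !mulrA mulrBl mul1r.
have : s z * z = 0 by rewrite ez -mulrA hz mulr0.
move/hred; rewrite /z => /eqP; rewrite subr_eq0 !mulrA => /eqP e.
split.
- by rewrite mulrA e.
- by rewrite !mulrA k2.
- by rewrite sM sM sK sd !mulrA.
- by rewrite -mulrA k4.
Qed.

Lemma MP_G (p y b : R) : p * p = p -> s p = p -> is_MP_inverse s y b -> y * b = b * y ->
  (1 - p) * y = 1 - p -> y * p = p * y * p -> is_MP_inverse s (y * p) (b * p).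
Proof.
move=> pp sp [h1 h2 h3 h4] EF hpy ypy.
have e1 : (1 - p) * (1 - b * y) = 0.
  by rewrite -{1}hpy -mulrA mulrBr mulr1 !mulrA h1 subrr mulr0.
have e2 : (1 - p) * b = 1 - p.
  move/eqP: e1; rewrite mulrBr mulr1 subr_eq0 => /eqP e1.
  by rewrite {2}e1 -EF mulrA hpy.
have pbp : p * b * p = b * p.
  have -> : p * b = b - (1 - p) * b by rewrite mulrBl mul1r opprB addrC subrK.
  by rewrite e2 mulrBl mulrBl mul1r pp subrr subr0.
have e3 : b * y * (1 - p) = 1 - p.
  have := congr1 s e1; rewrite sM s0 !sB s1 sp h4 mulrBl mul1r.
  by move/eqP; rewrite subr_eq0 => /eqP <-.
have fp : b * y * p = b * y - (1 - p).
  by rewrite -e3 mulrBr mulr1 opprB addrC subrK.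
have sfp : s (b * y * p) = b * y * p by rewrite fp !sB s1 sp h4.
split.
- by rewrite !mulrA (lA3 pbp) !mulrA (lA3 (esym ypy)) !mulrA h1.
- by rewrite !mulrA (lA3 (esym ypy)) !mulrA (lA3 pbp) !mulrA h2.
- by rewrite !mulrA (lA3 pbp) !mulrA EF.
- by rewrite !mulrA (lA3 (esym ypy)) !mulrA.
Qed.

Lemma kerlem (p q z : R) : p * p = p -> s p = p -> q * q = q -> s q = q ->
  p * z = z -> p * q * z = z -> q * z = z.
Proof.
move=> pp sp qq sq pz pqz.
have szp : s z * p = s z.
  by rewrite -{2}pz sM sp.
set t := (1 - q) * z.
have q2 : (1 - q) * (1 - q) = 1 - q.
  by rewrite mulrBr mulr1 mulrBl mul1r qq subrr subr0.
have szz : s z * z = s z * q * z by rewrite -{2}pqz !mulrA szp.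
have : s t * t = 0.
  rewrite /t sM sB s1 sq mulrA -(mulrA (s z)) q2 mulrBr mulr1 mulrBl.
  by rewrite szz subrr.
by move/hred; rewrite /t mulrBl mul1r => /eqP; rewrite subr_eq0 => /eqP <-.
Qed.

Lemma EF_u (p q b : R) : p * p = p -> s p = p -> q * q = q -> s q = q ->
  is_MP_inverse s (1 - p * q) b -> (1 - p * q) * b = b * (1 - p * q).
Proof.
move=> pp sp qq sq hb; case: (hb) => h1 h2 h3 h4.
set u := 1 - p * q.
have su : s u = 1 - q * p by rewrite /u sB s1 sM sp sq.
set z := 1 - b * u.
set z' := 1 - u * b.
have uz : u * z = 0 by rewrite /z mulrBr mulr1 mulrA h1 subrr.
have pu : (1 - p) * u = 1 - p.
  by rewrite /u mulrBr mulr1 mulrBl mul1r mulrA pp subrr subr0.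
have pz : p * z = z.
  have : (1 - p) * z = 0 by rewrite -pu -mulrA uz mulr0.
  by rewrite mulrBl mul1r => /eqP; rewrite subr_eq0 => /eqP <-.
have pqz : p * q * z = z.
  by move/eqP: uz; rewrite /u mulrBl mul1r subr_eq0 => /eqP <-.
have qz := kerlem pp sp qq sq pz pqz.
have suz : s u * z = 0 by rewrite su mulrBl mul1r -mulrA pz qz subrr.
have E1 : u * b * z = 0 by rewrite -h3 sM -mulrA suz mulr0.
have suz' : s u * z' = 0.
  rewrite /z' mulrBr mulr1 mulrA.
  have -> : s u * u * b = s u * s (u * b) by rewrite h3 mulrA.
  by rewrite -sM h1 subrr.
have quz : (1 - q) * s u = 1 - q.
  by rewrite su mulrBr mulr1 mulrBl mul1r mulrA qq subrr subr0.
have qz' : q * z' = z'.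
  have : (1 - q) * z' = 0 by rewrite -quz -mulrA suz' mulr0.
  by rewrite mulrBl mul1r => /eqP; rewrite subr_eq0 => /eqP <-.
have qpz' : q * p * z' = z'.
  by move/eqP: suz'; rewrite su mulrBl mul1r subr_eq0 => /eqP <-.
have pz' := kerlem qq sq pp sp qz' qpz'.
have uz' : u * z' = 0 by rewrite /u mulrBl mul1r -mulrA qz' pz' subrr.
have F1 : b * u * z' = 0 by rewrite -mulrA uz' mulr0.
have EEF : u * b = u * b * (b * u).
  by move/eqP: E1; rewrite /z mulrBr mulr1 subr_eq0 => /eqP.
have FFE : b * u = b * u * (u * b).
  by move/eqP: F1; rewrite /z' mulrBr mulr1 subr_eq0 => /eqP.
by rewrite -h3 EEF sM h3 h4 -FFE.
Qed.

Section Proj.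
Variables p q : R.
Hypotheses (pp : p * p = p) (sp : s p = p) (qq : q * q = q) (sq : s q = q).

Let a := p - p * q * p.

Let sa : s a = a. Proof. by rewrite /a sB sp !sM sp sq mulrA. Qed.
Let pa : p * a = a. Proof. by rewrite /a mulrBr pp !mulrA pp. Qed.
Let ap : a * p = a. Proof. by rewrite /a mulrBl pp -(mulrA _ p p) pp. Qed.
Let pqp : p * q * p = p - a. Proof. by rewrite /a opprB addrC subrK. Qed.
Let p1p : (1 - p) * p = 0. Proof. by rewrite mulrBl mul1r pp subrr. Qed.
Let pp1 : p * (1 - p) = 0. Proof. by rewrite mulrBr mulr1 pp subrr. Qed.

Lemma L13 b : is_MP_inverse s (1 - p * q) b -> is_MP_inverse s a (b * p).
Proof.
move=> hb.
have EF := EF_u pp sp qq sq hb.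
have pu : (1 - p) * (1 - p * q) = 1 - p.
  by rewrite mulrBr mulr1 mulrBl mul1r mulrA pp subrr subr0.
have ep : (1 - p * q) * p = a by rewrite mulrBl mul1r.
have pup : (1 - p * q) * p = p * (1 - p * q) * p.
  by rewrite ep mulrBr mulr1 mulrBl pp !mulrA pp.
by have := MP_G pp sp hb EF pu pup; rewrite ep.
Qed.

Section C.
Variable c : R.
Hypothesis hc : is_MP_inverse s a c.

Let sc : s c = c. Proof. exact: MP_selfadj sa hc. Qed.
Let aca : a * c * a = a. Proof. by case: hc. Qed.
Let cac : c * a * c = c. Proof. by case: hc. Qed.
Let sac : s (a * c) = a * c. Proof. by case: hc. Qed.
Let sca : s (c * a) = c * a. Proof. by case: hc. Qed.
Let ca_ac : c * a = a * c. Proof. by rewrite -sca sM sa sc. Qed.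
Let cca : c * (c * a) = c. Proof. by rewrite -[c * a]sca sM sc sa mulrA cac. Qed.
Let acc : a * c * c = c. Proof. by rewrite -[a * c]sac sM sc sa cac. Qed.
Let cp : c * p = c. Proof. by rewrite -{1}cca -!mulrA ap cca. Qed.
Let pc : p * c = c. Proof. by rewrite -{1}acc !mulrA pa acc. Qed.

Let p1c : (1 - p) * c = 0. Proof. by rewrite mulrBl mul1r pc subrr. Qed.
Let c1p : c * (1 - p) = 0. Proof. by rewrite mulrBr mulr1 cp subrr. Qed.
Let p1a : (1 - p) * a = 0. Proof. by rewrite mulrBl mul1r pa subrr. Qed.
Let a1p : a * (1 - p) = 0. Proof. by rewrite mulrBr mulr1 ap subrr. Qed.
Let q1 : (1 - p) * (1 - p) = 1 - p.
Proof. by rewrite mulrBr mulr1 p1p subr0. Qed.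

Lemma L32 : is_MP_inverse s ((1 - p) + a) ((1 - p) + c).
Proof.
have wd : ((1 - p) + a) * ((1 - p) + c) = (1 - p) + a * c.
  by rewrite mulrDl (mulrDr (1 - p)) (mulrDr a) q1 p1c a1p addr0 add0r.
have dw : ((1 - p) + c) * ((1 - p) + a) = (1 - p) + c * a.
  by rewrite mulrDl (mulrDr (1 - p)) (mulrDr c) q1 p1a c1p addr0 add0r.
split.
- by rewrite wd mulrDl (mulrDr (1 - p)) (mulrDr (a * c)) q1 p1a -mulrA c1p mulr0 aca addr0 add0r.
- by rewrite dw mulrDl (mulrDr (1 - p)) (mulrDr (c * a)) q1 p1c -mulrA a1p mulr0 cac addr0 add0r.
- by rewrite wd sD sB s1 sp sac.
- by rewrite dw sD sB s1 sp sca.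
Qed.

Let oneB (x y : R) : (1 - x) + y = 1 - (x - y).
Proof. by rewrite opprB addrA addrAC. Qed.

Lemma L31 : is_MP_inverse s (1 - p * q) ((1 - p) + c * (1 + q * (1 - p))).
Proof.
set u := 1 - p * q.
set v := (1 - p) + c * (1 + q * (1 - p)).
set K := p - c * a.
have sKK : s K = K by rewrite /K sB sp sca.
have pK : p * K = K by rewrite /K mulrBr pp mulrA pc.
have Kp : K * p = K by rewrite /K mulrBl pp -mulrA ap.
have aK : a * K = 0 by rewrite /K mulrBr ap mulrA aca subrr.
have pqK : p * q * K = K.
  move/eqP: aK; rewrite {1}/a mulrBl pK -(mulrA (p * q) p K) pK subr_eq0.
  by move/eqP <-.
have qK := kerlem pp sp qq sq pK pqK.
have Kq : K * q = K by have := congr1 s qK; rewrite sM sKK sq.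
have Ku : K * u = 0 by rewrite /u mulrBr mulr1 mulrA Kp Kq subrr.
have K1p : K * (1 - p) = 0 by rewrite mulrBr mulr1 Kp subrr.
have Kc : K * c = 0 by rewrite /K mulrBl pc cac subrr.
have Kv : K * v = 0 by rewrite /v mulrDr K1p mulrA Kc !mul0r add0r.
have pu : (1 - p) * u = 1 - p.
  by rewrite /u mulrBr mulr1 mulrBl mul1r mulrA pp subrr subr0.
have uc : u * c = a * c.
  rewrite /u mulrBl mul1r -{2}pc mulrA pqp mulrBl pc.
  by rewrite opprB addrC subrK.
have Z : p * q * (1 - p) = a * c * q * (1 - p).
  have h : K * q * (1 - p) = 0 by rewrite Kq K1p.
  rewrite /K (mulrBl q p (c * a)) (mulrBl (1 - p) (p * q) (c * a * q)) ca_ac in h.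
  by move/eqP: h; rewrite subr_eq0 => /eqP.
have uv : u * v = 1 - K.
  rewrite /v mulrDr mulrA uc (mulrDr (a * c)) mulr1 !mulrA.
  rewrite (_ : u * (1 - p) = (1 - p) - p * q * (1 - p)); last first.
    by rewrite /u mulrBl mul1r.
  by rewrite Z addrACA addNr addr0 /K ca_ac oneB.
have cqp : c * q * p = c - c * a.
  by rewrite -{1}cp -!mulrA (mulrA p q p) pqp mulrBr cp.
have vu : v * u = 1 - K.
  rewrite /v mulrDl pu -mulrA mulrDl mul1r -mulrA pu mulrDr.
  rewrite {1}/u mulrBr mulr1 mulrA cp mulrA mulrBr mulr1 (addrA (c - c * q)) subrK cqp.
  by rewrite opprB [c + _]addrC subrK oneB.
split.
- by rewrite uv mulrBl mul1r Ku subr0.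
- by rewrite vu mulrBl mul1r Kv subr0.
- by rewrite uv sB s1 sKK.
- by rewrite vu sB s1 sKK.
Qed.
End C.

Lemma five : [/\ MP_invertible s (1 - p * q) <-> MP_invertible s a,
  MP_invertible s (1 - p * q * p) <-> MP_invertible s a,
  MP_invertible s (p - p * q) <-> MP_invertible s a &
  MP_invertible s (p - q * p) <-> MP_invertible s a].
Proof.
have sy : s (p - q * p) = p - p * q by rewrite sB sp sM sp sq.
have syy : s (p - q * p) * (p - q * p) = a.
  rewrite sy mulrBl !mulrBr pp !mulrA (lA2 qq) subrr subr0.
  done.
split.
- split; first by case=> b hb; exists (b * p); exact: L13.
  by case=> c hc; eexists; exact: L31 hc.
- have e2 : 1 - p * q * p = (1 - p) + a by rewrite /a addrA subrK.
  split; last by case=> c hc; rewrite e2; eexists; exact: L32 hc.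
  case=> b hb; exists (b * p).
  have sw : s (1 - p * q * p) = 1 - p * q * p by rewrite sB s1 !sM sp sq mulrA.
  have sb := MP_selfadj sw hb.
  have EF : (1 - p * q * p) * b = b * (1 - p * q * p).
    by case: (hb) => _ _ h3 _; rewrite -h3 sM sb sw.
  have pw : (1 - p) * (1 - p * q * p) = 1 - p.
    by rewrite mulrBr mulr1 !mulrA p1p !mul0r subr0.
  have ewp : (1 - p * q * p) * p = a.
  by rewrite mulrBl mul1r -(mulrA _ p p) pp.
  have pwp : (1 - p * q * p) * p = p * (1 - p * q * p) * p.
    by rewrite ewp mulrBr mulr1 mulrBl pp !mulrA pp -(mulrA _ p p) pp.
  by have := MP_G pp sp hb EF pw pwp; rewrite ewp.
- split.
    case=> b hb; have := MP_star hb; rewrite -sy sK => /MP_M1; rewrite syy.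
    by move=> h; eexists; exact: h.
  case=> d hd; rewrite -syy in hd; have := MP_M2 hd => /MP_star; rewrite sy.
  by move=> h; eexists; exact: h.
- split.
    by case=> b /MP_M1; rewrite syy => h; eexists; exact: h.
  by case=> d hd; rewrite -syy in hd; eexists; exact: MP_M2 hd.
Qed.
End Proj.
End MP.

Unset Implicit Arguments.
Set Strict Implicit.

Theorem corollary2p5 (R : pzRingType) (star : R -> R)
  (hinv : involution star) (hred : star_reducing star) (p q : R)
  (hp : projection star p) (hq : projection star q) :
  [<-> MP_invertible star (1 - p * q);
       MP_invertible star (1 - p * q * p);
       MP_invertible star (p - p * q * p);
       MP_invertible star (p - p * q);
       MP_invertible star (p - q * p);
       MP_invertible star (1 - q * p);
       MP_invertible star (1 - q * p * q);
       MP_invertible star (q - q * p * q);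
       MP_invertible star (q - q * p);
       MP_invertible star (q - p * q)]
  /\ (forall b, is_MP_inverse star (1 - p * q) b ->
        is_MP_inverse star (p - p * q * p) (b * p)).
Proof.
case: hp => pp sp; case: hq => qq sq.
split; last by move=> b; exact: L13.
have [A1 A2 A3 A4] := five hinv hred pp sp qq sq.
have [B1 B2 B3 B4] := five hinv hred qq sq pp sp.
have sM x y : star (x * y) = star y * star x by case: hinv.
have sK x : star (star x) = x by case: hinv.
have su : star (1 - p * q) = 1 - q * p.
  have s1 : star 1 = 1.
    by have h := sM (star 1) 1; rewrite mulr1 sK mulr1 in h.
  have sB x y : star (x - y) = star x - star y.
    case: hinv => _ sD _.
    have s0 : star 0 = 0.
      by have h := sD 0 0; rewrite addr0 in h; apply: (addrI (star 0)); rewrite -h addr0.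
    have sN z : star (- z) = - star z.
      by apply: (addrI (star z)); rewrite -sD !subrr s0.
    by rewrite sD sN.
  by rewrite sB s1 sM sp sq.
have C : MP_invertible star (1 - p * q) <-> MP_invertible star (1 - q * p).
  split; case=> b hb; have := MP_star hinv hb; rewrite ?su.
    by move=> h; eexists; exact: h.
  by rewrite -su sK => h; eexists; exact: h.
tfae.
- by move/A1/A2.
- by move/A2.
- by move/A3.
- by move/A3/A4.
- by move/A4/A1/C.
- by move/B1/B2.
- by move/B2.
- by move/B3.
- by move/B3/B4.
- by move/B4/B1/C.
Qed.
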